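(* For every kernel configuration $C$, the theory $T_\theta^C$ is inductive, i.e. the union of any chain of models of $T_\theta^C$ (under substructure) is a model of $T_\theta^C$.
   Context: Setting: $L$ is a first-order language, $T$ a model-complete $L$-theory and $K$ a field. There are $L$-formulas without parameters which define, in every model $\mathcal M\models T$, a nontrivial $K$-vector space $\mathbb V=\mathbb V^{\mathcal M}$; elements of $\mathbb V$ are treated as single elements. $L_\theta=L\cup\{\theta\}$, $\theta$ a new unary function symbol; $T_\theta$ is $T$ plus axioms saying $\theta|_{\mathbb V}$ is a $K$-linear endomorphism of $\mathbb V$ and $\theta(x)=0$ for $x\notin\mathbb V$. For $\rho=\sum_i(\rho)_iX^i\in K[X]$, $\rho[\theta]:=\sum_i(\rho)_i\theta^i$, $\mathrm{Ker}(\rho)=\{v\in\mathbb V:\rho[\theta](v)=0\}$. $K[X]_{\mathrm{irr}}$ is the set of monic irreducible polynomials. A kernel configuration is a pair $C=(c,d)$ with $c:K[X]_{\mathrm{irr}}\to\mathbb N\cup\{\infty\}$, $d\in\mathbb N_{>0}\cup\{\infty\}$ such that $d=\infty$ or $d=\sum_f\deg(f)c(f)$; write $C(f)=c(f)$. $C$ is algebraic if $d<\infty$, with $\mathrm{MiPo}(C)=\prod_ff^{C(f)}$, and transcendental otherwise. $\theta$ is a $C$-endomorphism if $\mathrm{Ker}(\mathrm{MiPo}(C))=\mathbb V$ (algebraic case), resp. $\mathrm{Ker}(f^{C(f)})=\mathrm{Ker}(f^{C(f)+1})$ for all $f$ with $C(f)<\infty$ (transcendental case). $T^C_\theta:=T_\theta\cup\{\theta|_{\mathbb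 V}\text{ is a }C\text{-endomorphism}\}$. *)

(* Defs.v *)
From HB Require Import structures.
From mathcomp Require Import all_boot all_order all_algebra.

Unset Strict Implicit.
Unset Printing Implicit Defensive.

Import GRing.Theory.

Record signature := Signature {
  fsym : Type;                 (* function symbols (constants = arity 0) *)
  fary : fsym -> nat;
  rsym : Type;
  rary : rsym -> nat }.

Section FO.
Variable L : signature.

Inductive fo_term : Type :=
  | TVar : nat -> fo_term
  | TApp (f : fsym L) : ('I_(fary L f) -> fo_term) -> fo_term.

(* formulas; quantifiers bind variable 0 (de Bruijn) *)
Inductive fo_formula : Type :=
  | FFalse : fo_formula
  | FEq : fo_term -> fo_term -> fo_formula
  | FRel (r : rsym L) : ('I_(rary L r) -> fo_term) -> fo_formula
  | FImp : fo_formula -> fo_formula -> fo_formula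
  | FAnd : fo_formula -> fo_formula -> fo_formula
  | FOr  : fo_formula -> fo_formula -> fo_formula
  | FAll : fo_formula -> fo_formula
  | FEx  : fo_formula -> fo_formula.

Record lstruct := LStruct {
  carrier :> Type;
  funs : forall f : fsym L, ('I_(fary L f) -> carrier) -> carrier;
  rels : forall r : rsym L, ('I_(rary L r) -> carrier) -> Prop }.



Definition scons (A : Type) (x : A) (e : nat -> A) : nat -> A :=
  fun i => if i is i'.+1 then e i' else x.

Fixpoint eval (M : lstruct) (e : nat -> M) (t : fo_term) {struct t} : M :=
  match t with
  | TVar i => e i
  | TApp f a => funs M f (fun j => eval M e (a j))
  end.

Fixpoint sat (M : lstruct) (e : nat -> M) (phi : fo_formula) {struct phi} : Prop :=
  match phi with
  | FFalse => False
  | FEq t1 t2 => eval M e t1 = eval M e t2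
  | FRel r a => rels M r (fun j => eval M e (a j))
  | FImp p q => sat M e p -> sat M e q
  | FAnd p q => sat M e p /\ sat M e q
  | FOr p q => sat M e p \/ sat M e q
  | FAll p => forall x : M, sat M (scons M x e) p
  | FEx p => exists x : M, sat M (scons M x e) p
  end.

(* M satisfies phi(xs) : variables i < size xs are assigned xs_i; any other
   (free) variables are universally quantified (no parameters). *)
Definition holds (M : lstruct) (phi : fo_formula) (xs : seq M) : Prop :=
  forall e : nat -> M, sat M (fun i => nth (e i) xs i) phi.

Definition is_model (M : lstruct) (T : fo_formula -> Prop) : Prop :=
  inhabited M /\ forall phi, T phi -> forall e : nat -> M, sat M e phi.

Definition embedding (M N : lstruct) (h : M -> N) : Prop :=
  injective h /\
  (forall f a, h (funs M f a) = funs N f (fun j => h (a j))) /\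
  (forall r a, rels M r a <-> rels N r (fun j => h (a j))).

Definition model_complete (T : fo_formula -> Prop) : Prop :=
  forall (M N : lstruct), is_model M T -> is_model N T ->
  forall h : M -> N, embedding M N h ->
  forall (phi : fo_formula) (e : nat -> M), sat M e phi <-> sat N (fun i => h (e i)) phi.

Definition func_closed (M : lstruct) (P : M -> Prop) : Prop :=
  forall f a, (forall j, P (a j)) -> P (funs M f a).

Definition substr (M : lstruct) (P : M -> Prop) (HP : func_closed M P) : lstruct :=
  {| carrier := {x : M | P x};
     funs := fun f a => exist P (funs M f (fun j => sval (a j)))
                              (HP f _ (fun j => proj2_sig (a j)));
     rels := fun r a => rels M r (fun j => sval (a j)) |}.

Definition sub_unary (M : lstruct) (P : M -> Prop) (HP : func_closed M P) (th : M -> M)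
  (Hth : forall x, P x -> P (th x)) : substr M P HP -> substr M P HP :=
  fun x => exist P (th (sval x)) (Hth _ (proj2_sig x)).

End FO.
Arguments TVar {L}.  Arguments TApp {L}.
Arguments FFalse {L}. Arguments FEq {L}. Arguments FRel {L}. Arguments FImp {L}.
Arguments FAnd {L}. Arguments FOr {L}. Arguments FAll {L}. Arguments FEx {L}.
Arguments funs {L}. Arguments rels {L}. Arguments carrier {L}.
Arguments scons {A}.
Arguments eval {L}. Arguments sat {L}. Arguments holds {L}. Arguments is_model {L}.
Arguments embedding {L}. Arguments model_complete {L}. Arguments func_closed {L}.
Arguments substr {L}. Arguments sub_unary {L}.

(* formulas (without parameters) defining V (variable 0), the graph of
   addition (variables 0,1,2 : x + y = z) and, for each a in K, the graph of
   scalar multiplication by a (variables 0,1 : a x = y) *)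
Record vsdef (L : signature) (K : fieldType) := VSDef {
  phiV : fo_formula L;
  phiAdd : fo_formula L;
  phiSc : K -> fo_formula L }.
Arguments phiV {L K}. Arguments phiAdd {L K}. Arguments phiSc {L K}.

Section VS.
Variables (L : signature) (K : fieldType) (D : vsdef L K) (M : lstruct L).

Definition inV (x : M) := holds M (phiV D) [:: x].
Definition addR (x y z : M) := holds M (phiAdd D) [:: x; y; z].
Definition scR (a : K) (x y : M) := holds M (phiSc D a) [:: x; y].
Definition iszero (z : M) := inV z /\ addR z z z.

Definition defines_nt_vs : Prop :=
  exists (add : M -> M -> M) (sc : K -> M -> M) (z : M),
    inV z /\
    (forall x y, inV x -> inV y -> inV (add x y)) /\
    (forall a x, inV x -> inV (sc a x)) /\
    (forall x y u, inV x -> inV y -> (addR x y u <-> u = add x y)) /\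
    (forall a x u, inV x -> (scR a x u <-> u = sc a x)) /\
    (forall x y w, inV x -> inV y -> inV w -> add x (add y w) = add (add x y) w) /\
    (forall x y, inV x -> inV y -> add x y = add y x) /\
    (forall x, inV x -> add z x = x) /\
    (forall x, inV x -> exists y, inV y /\ add x y = z) /\
    (forall a x y, inV x -> inV y -> sc a (add x y) = add (sc a x) (sc a y)) /\
    (forall a b x, inV x -> sc (a + b)%R x = add (sc a x) (sc b x)) /\
    (forall a b x, inV x -> sc (a * b)%R x = sc a (sc b x)) /\
    (forall x, inV x -> sc 1%R x = x) /\
    (exists x, inV x /\ x <> z).

Variable th : M -> M.

(* axioms of T_theta beyond T: th|V is a K-linear endomorphism of V and
   th(x) = 0 for x outside V *)
Definition theta_ok : Prop :=
  (forall v, inV v -> inV (th v)) /\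
  (forall v w u, inV v -> inV w -> inV u -> addR v w u -> addR (th v) (th w) (th u)) /\
  (forall a v u, inV v -> inV u -> scR a v u -> scR a (th v) (th u)) /\
  (forall x, ~ inV x -> iszero (th x)).

(* polyrel s v u  <->  u = rho[th](v) where s is the coefficient list of rho
   (lowest degree first), computed by Horner:
   (c + X rho')[th](v) = c v + rho'[th](th v) *)
Fixpoint polyrel (s : seq K) (v u : M) {struct s} : Prop :=
  match s with
  | [::] => iszero u
  | c :: s' => exists w w', [/\ inV w, inV w', polyrel s' (th v) w,
                                scR c v w' & addR w' w u]
  end.

Definition Ker (rho : {poly K}) (v : M) : Prop :=
  inV v /\ exists u, polyrel (polyseq rho) v u /\ iszero u.

End VS.
Arguments inV {L K}. Arguments addR {L K}. Arguments scR {L K}.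
Arguments iszero {L K}. Arguments defines_nt_vs {L K}. Arguments theta_ok {L K}.
Arguments polyrel {L K}. Arguments Ker {L K}.

Section KConf.
Variable K : fieldType.

Definition irr_monic (f : {poly K}) : Prop := f \is monic /\ irreducible_poly f.

(* N u {oo} is encoded as option nat, None = oo.
   fin_support c n s : s lists (without repetition) monic irreducibles outside
   of which c vanishes, c is finite on s, and n = sum_f deg(f) c(f). *)
Definition fin_support (c : {poly K} -> option nat) (n : nat) (s : seq {poly K}) : Prop :=
  uniq s /\
  (forall f, f \in s -> irr_monic f) /\
  (forall f, irr_monic f -> f \notin s -> c f = Some 0%N) /\
  (forall f, f \in s -> c f <> None) /\
  n = (\sum_(f <- s) ((size f).-1 * odflt 0 (c f)))%N.

Definition kernel_configuration (c : {poly K} -> option nat) (d : option nat) : Prop :=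
  d <> Some 0%N /\ (forall n, d = Some n -> exists s, fin_support c n s).

Definition is_MiPo (c : {poly K} -> option nat) (d : option nat) (P : {poly K}) : Prop :=
  exists n s, d = Some n /\ fin_support c n s /\
              P = (\prod_(f <- s) f ^+ (odflt 0%N (c f)))%R.

End KConf.
Arguments irr_monic {K}. Arguments fin_support {K}.
Arguments kernel_configuration {K}. Arguments is_MiPo {K}.

Section TC.
Variables (L : signature) (K : fieldType) (D : vsdef L K) (M : lstruct L) (th : M -> M).

Definition C_endo (c : {poly K} -> option nat) (d : option nat) : Prop :=
  match d with
  | Some _ => forall P, is_MiPo c d P -> forall v, inV D M v -> Ker D M th P v
  | None => forall f m, irr_monic f -> c f = Some m ->
              forall v, Ker D M th (f ^+ m)%R v <-> Ker D M th (f ^+ m.+1)%R v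
  end.

(* (M, th) is a model of T_theta^C (an L_theta-structure is an L-structure
   together with the interpretation th of theta) *)
Definition model_TC (T : fo_formula L -> Prop) (c : {poly K} -> option nat)
  (d : option nat) : Prop :=
  is_model M T /\ theta_ok D M th /\ C_endo c d.

End TC.
Arguments C_endo {L K}. Arguments model_TC {L K}.

(* Main.v *)
Require Import Defs.
From mathcomp Require Import all_boot all_order all_algebra.
From mathcomp Require Import zify.
From Stdlib Require Import FunctionalExtensionality ProofIrrelevance.

Fixpoint tb {L : signature} (t : fo_term L) : nat :=
  match t with TVar i => i.+1 | TApp f a => \max_(j < fary L f) tb (a j) end.

Fixpoint fb {L : signature} (p : fo_formula L) : nat :=
  match p with
  | FFalse => 0
  | FEq t1 t2 => maxn (tb t1) (tb t2)
  | FRel r a => \max_(j < rary L r) tb (a j)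
  | FImp p q | FAnd p q | FOr p q => maxn (fb p) (fb q)
  | FAll p | FEx p => (fb p).-1
  end.

Lemma eval_agree (L : signature) (M : lstruct L) (t : fo_term L) (e1 e2 : nat -> M) :
  (forall k, k < tb t -> e1 k = e2 k) -> eval M e1 t = eval M e2 t.
Proof.
elim: t e1 e2 => [n|f a IH] e1 e2 /= H; first by apply: H.
congr (funs M f); apply: functional_extensionality => j; apply: IH => k Hk.
apply: H; apply: leq_trans Hk _; exact: (leq_bigmax (F := fun j => tb (a j)) j).
Qed.

Lemma sat_agree (L : signature) (M : lstruct L) (p : fo_formula L) (e1 e2 : nat -> M) :
  (forall k, k < fb p -> e1 k = e2 k) -> (sat M e1 p <-> sat M e2 p).
Proof.
elim: p e1 e2 => [|t1 t2|r a|p IHp q IHq|p IHp q IHq|p IHp q IHq|p IHp|p IHp] e1 e2 /= H.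
- by [].
- rewrite (eval_agree _ _ t1 e1 e2) ?(eval_agree _ _ t2 e1 e2) //.
  + by move=> k Hk; apply: H; rewrite leq_max Hk orbT.
  + by move=> k Hk; apply: H; rewrite leq_max Hk.
- have -> : (fun j => eval M e1 (a j)) = (fun j => eval M e2 (a j)) => //.
  apply: functional_extensionality => j; apply: eval_agree => k Hk.
  apply: H; apply: leq_trans Hk _; exact: (leq_bigmax (F := fun j => tb (a j)) j).
- have H1 := IHp e1 e2 (fun k Hk => H k (leq_trans Hk (leq_maxl _ _))).
  have H2 := IHq e1 e2 (fun k Hk => H k (leq_trans Hk (leq_maxr _ _))).
  tauto.
- have H1 := IHp e1 e2 (fun k Hk => H k (leq_trans Hk (leq_maxl _ _))).
  have H2 := IHq e1 e2 (fun k Hk => H k (leq_trans Hk (leq_maxr _ _))).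
  tauto.
- have H1 := IHp e1 e2 (fun k Hk => H k (leq_trans Hk (leq_maxl _ _))).
  have H2 := IHq e1 e2 (fun k Hk => H k (leq_trans Hk (leq_maxr _ _))).
  tauto.
- have E : forall x, sat M (scons x e1) p <-> sat M (scons x e2) p.
    move=> x; apply: IHp => -[|k] Hk //=; apply: H; lia.
  split=> Hx x; by apply/E.
- have E : forall x, sat M (scons x e1) p <-> sat M (scons x e2) p.
    move=> x; apply: IHp => -[|k] Hk //=; apply: H; lia.
  split=> -[x Hx]; exists x; by apply/E.
Qed.

Fixpoint tren {L : signature} (r : nat -> nat) (t : fo_term L) : fo_term L :=
  match t with TVar i => TVar (r i) | TApp f a => TApp f (fun j => tren r (a j)) end.

Definition upr (r : nat -> nat) : nat -> nat := fun k => if k is k'.+1 then (r k').+1 else 0.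

Fixpoint fren {L : signature} (r : nat -> nat) (p : fo_formula L) : fo_formula L :=
  match p with
  | FFalse => FFalse
  | FEq t1 t2 => FEq (tren r t1) (tren r t2)
  | FRel rr a => FRel rr (fun j => tren r (a j))
  | FImp p q => FImp (fren r p) (fren r q)
  | FAnd p q => FAnd (fren r p) (fren r q)
  | FOr p q => FOr (fren r p) (fren r q)
  | FAll p => FAll (fren (upr r) p)
  | FEx p => FEx (fren (upr r) p)
  end.

Lemma eval_ren (L : signature) (M : lstruct L) (t : fo_term L) r (e : nat -> M) :
  eval M e (tren r t) = eval M (fun k => e (r k)) t.
Proof.
elim: t => [n|f a IH] //=; congr (funs M f); apply: functional_extensionality => j; exact: IH.
Qed.

Lemma sat_ren (L : signature) (M : lstruct L) (p : fo_formula L) r (e : nat -> M) :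
  sat M e (fren r p) <-> sat M (fun k => e (r k)) p.
Proof.
elim: p r e => [|t1 t2|rr a|p IHp q IHq|p IHp q IHq|p IHp q IHq|p IHp|p IHp] r e /=.
- by [].
- by rewrite !eval_ren.
- have -> : (fun j => eval M e (tren r (a j))) = (fun j => eval M (fun k => e (r k)) (a j)) => //.
  apply: functional_extensionality => j; exact: eval_ren.
- have := IHp r e; have := IHq r e; tauto.
- have := IHp r e; have := IHq r e; tauto.
- have := IHp r e; have := IHq r e; tauto.
- have E : forall x, (fun k => scons x e (upr r k)) = scons x (fun k => e (r k)).
    by move=> x; apply: functional_extensionality => -[|k].
  split=> Hx x; have := IHp (upr r) (scons x e); rewrite E; move=> [H1 H2]; [exact: H1| exact: H2].
- have E : forall x, (fun k => scons x e (upr r k)) = scons x (fun k => e (r k)).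
    by move=> x; apply: functional_extensionality => -[|k].
  split=> -[x Hx]; exists x; have := IHp (upr r) (scons x e); rewrite E; move=> [H1 H2]; [exact: H1| exact: H2].
Qed.

Fixpoint alln {L : signature} (n : nat) (p : fo_formula L) : fo_formula L :=
  if n is n'.+1 then FAll (alln n' p) else p.

Lemma sat_alln (L : signature) (M : lstruct L) n (p : fo_formula L) (e : nat -> M) :
  sat M e (alln n p) <-> forall g : nat -> M, sat M (fun k => if k < n then g k else e (k - n)) p.
Proof.
elim: n e => [|n IH] e /=.
- have E : forall g : nat -> M, (fun k => if k < 0 then g k else e (k - 0)) = e.
    by move=> g; apply: functional_extensionality => k; rewrite subn0.
  split=> [H g|H]; first by rewrite E. 
  by have := H e; rewrite E.
- split=> [H g|H x].
  + have := (IH (scons (g n) e)).1 (H (g n)) g.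
    have -> // : (fun k => if k < n then g k else scons (g n) e (k - n)) =
                 (fun k => if k < n.+1 then g k else e (k - n.+1)).
    apply: functional_extensionality => k.
    case: (ltngtP k n) => Hk.
    * by rewrite ltnW.
    * rewrite ltnNge Hk /=.
      have -> : k - n = (k - n.+1).+1 by lia.
      by [].
    * by rewrite Hk ltnSn subnn.
  + apply/IH => g.
    have := H (fun k => if k < n then g k else x).
    have -> // : (fun k => if k < n.+1 then (if k < n then g k else x) else e (k - n.+1)) =
                 (fun k => if k < n then g k else scons x e (k - n)).
    apply: functional_extensionality => k.
    case: (ltngtP k n) => Hk.
    * by rewrite ltnW.
    * rewrite ltnNge Hk /=.
      have -> : k - n = (k - n.+1).+1 by lia.
      by [].
    * by rewrite Hk ltnSn subnn.
Qed.

Definition closure {L : signature} (p : fo_formula L) (s : nat) : fo_formula L :=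
  let n := maxn (fb p) s in let m := n - s in
  alln m (fren (fun k => if k < s then k + m else k - s) p).

Lemma holds_closure (L : signature) (M : lstruct L) (p : fo_formula L) (xs : seq M) (rho : nat -> M) :
  (forall k, k < size xs -> rho k = nth (rho k) xs k) ->
  (holds M p xs <-> sat M rho (closure p (size xs))).
Proof.
move=> Hrho; rewrite /closure sat_alln.
set s := size xs; set n := maxn (fb p) s; set m := n - s.
split=> [H g|H e].
- apply/sat_ren.
  apply: (proj1 (sat_agree _ _ p (fun k => nth (g (k - s)) xs k) _ _)); last exact: H.
  move=> k Hk.
  have Hkn : k < n by rewrite leq_max Hk.
  case: (ltnP k s) => Hks.
  + have -> : k + m < m = false by apply/negbTE; rewrite -leqNgt leq_addl.
    rewrite addnK (Hrho k Hks); exact: set_nth_default.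
  + have -> : k - s < m by rewrite /m; lia.
    by rewrite nth_default.
- have := H (fun j => e (j + s)); move/sat_ren.
  apply: (proj1 (sat_agree _ _ p _ _ _)) => k Hk.
  have Hkn : k < n by rewrite leq_max Hk.
  case: (ltnP k s) => Hks.
  + have -> : k + m < m = false by apply/negbTE; rewrite -leqNgt leq_addl.
    rewrite addnK (Hrho k Hks); exact: set_nth_default.
  + have -> : k - s < m by rewrite /m; lia.
    by rewrite nth_default // subnK.
Qed.

Set Implicit Arguments.

Lemma sig_eq (A : Type) (P : A -> Prop) (x y : {a | P a}) : sval x = sval y -> x = y.
Proof. by move=> H; apply: eq_sig_hprop => // a p q; apply: proof_irrelevance. Qed.

Lemma upper (L : signature) (U : lstruct L) (I : Type) (S : I -> U -> Prop)
  (Hchain : forall i j, (forall x, S i x -> S j x) \/ (forall x, S j x -> S i x))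
  (Hcov : forall x, exists i, S i x) :
  forall i x, exists k, (forall y, S i y -> S k y) /\ S k x.
Proof.
move=> i x; have [j Hj] := Hcov x.
case: (Hchain i j) => H; first by exists j.
by exists i; split=> //; apply: H.
Qed.

Arguments upper {L U I S} Hchain Hcov i x.
Arguments sig_eq {A P} x y _.

Lemma eval_sub (L : signature) (U : lstruct L) (P : U -> Prop) (HP : func_closed U P)
  (t : fo_term L) (e : nat -> substr U P HP) :
  eval U (fun k => sval (e k)) t = sval (eval (substr U P HP) e t).
Proof.
elim: t => [n|f a IH] //=; congr (funs U f); apply: functional_extensionality => j; exact: IH.
Qed.

Definition incl (L : signature) (U : lstruct L) (P Q : U -> Prop) (HP : func_closed U P)
  (HQ : func_closed U Q) (H : forall x, P x -> Q x) : substr U P HP -> substr U Q HQ :=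
  fun x => exist Q (sval x) (H _ (proj2_sig x)).
Arguments incl {L U P Q} HP HQ H.

Lemma incl_emb (L : signature) (U : lstruct L) (P Q : U -> Prop) (HP : func_closed U P)
  (HQ : func_closed U Q) (H : forall x, P x -> Q x) :
  embedding (substr U P HP) (substr U Q HQ) (incl HP HQ H).
Proof.
split; [|split].
- by move=> x y /(f_equal sval) /= E; apply: sig_eq.
- by move=> f a; apply: sig_eq.
- by move=> r a.
Qed.

Lemma tarski (L : signature) (T : fo_formula L -> Prop) (U : lstruct L) (I : Type)
  (S : I -> U -> Prop) (HSf : forall i, func_closed U (S i))
  (HT : model_complete T)
  (Hchain : forall i j, (forall x, S i x -> S j x) \/ (forall x, S j x -> S i x))
  (Hcov : forall x, exists i, S i x)
  (Hmodel : forall i, is_model (substr U (S i) (HSf i)) T) :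
  forall p i (e : nat -> substr U (S i) (HSf i)),
    sat _ e p <-> sat U (fun k => sval (e k)) p.
Proof.
have up := upper Hchain Hcov.
have Hsc : forall i (x : substr U (S i) (HSf i)) e,
    (fun k => sval (scons x e k)) = scons (sval x) (fun k => sval (e k)).
  by move=> i x e; apply: functional_extensionality => -[|k].
elim=> [|t1 t2|r a|p IHp q IHq|p IHp q IHq|p IHp q IHq|p IHp|p IHp] i e /=.
- by [].
- rewrite !eval_sub; split; [by move->|exact: sig_eq].
- have -> // : (fun j => eval U (fun k => sval (e k)) (a j)) =
             (fun j => sval (eval (substr U (S i) (HSf i)) e (a j))).
  apply: functional_extensionality => j; exact: eval_sub.
- have := IHp i e; have := IHq i e; tauto.
- have := IHp i e; have := IHq i e; tauto.
- have := IHp i e; have := IHq i e; tauto.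
- split=> H x.
  + have [k [Hik Hk]] := up i x.
    have E := HT _ _ (Hmodel i) (Hmodel k) _ (incl_emb (HSf i) (HSf k) Hik) (FAll p) e.
    have := (proj1 E H (exist _ x Hk)).
    by move/IHp; rewrite Hsc.
  + by apply/IHp; rewrite Hsc; apply: H.
- split=> -[x H].
  + by exists (sval x); move/IHp: H; rewrite Hsc.
  + have [k [Hik Hk]] := up i x.
    have E := HT _ _ (Hmodel i) (Hmodel k) _ (incl_emb (HSf i) (HSf k) Hik) (FEx p) e.
    apply/E; exists (exist _ x Hk); apply/IHp; rewrite Hsc; exact: H.
Qed.

Lemma holds_transfer (L : signature) (T : fo_formula L -> Prop) (U : lstruct L) (I : Type)
  (S : I -> U -> Prop) (HSf : forall i, func_closed U (S i))
  (HT : model_complete T)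
  (Hchain : forall i j, (forall x, S i x -> S j x) \/ (forall x, S j x -> S i x))
  (Hcov : forall x, exists i, S i x)
  (Hmodel : forall i, is_model (substr U (S i) (HSf i)) T) :
  forall p i (xs : seq (substr U (S i) (HSf i))),
    holds _ p xs <-> holds U p (map sval xs).
Proof.
move=> p i xs.
have [[x0] _] := Hmodel i.
rewrite (holds_closure _ _ p xs (fun k => nth x0 xs k)); last first.
  by move=> k Hk; apply: set_nth_default.
rewrite (holds_closure _ _ p (map sval xs) (fun k => sval (nth x0 xs k))); last first.
  by move=> k Hk; rewrite (nth_map x0) // -(size_map sval).
rewrite size_map; exact: (tarski S HSf HT Hchain Hcov Hmodel _ i (fun k => nth x0 xs k)).
Qed.

Unset Implicit Arguments.

Theorem lemma2p18 (L : signature) (T : fo_formula L -> Prop) (K : fieldType)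
  (D : vsdef L K)
  (HT : model_complete T)
  (HD : forall M : lstruct L, is_model M T -> defines_nt_vs D M)
  (c : {poly K} -> option nat) (d : option nat)
  (HC : kernel_configuration c d)
  (U : lstruct L) (thU : U -> U) (I : Type) (S : I -> U -> Prop)
  (HSf : forall i, func_closed U (S i))
  (HSt : forall i x, S i x -> S i (thU x))
  (Hne : inhabited I)
  (Hchain : forall i j, (forall x, S i x -> S j x) \/ (forall x, S j x -> S i x))
  (Hcov : forall x, exists i, S i x)
  (Hmod : forall i, model_TC D (substr U (S i) (HSf i)) (sub_unary U (S i) (HSf i) thU (HSt i)) T c d) :
  model_TC D U thU T c d.
Proof.
have Hmodel : forall i, is_model (substr U (S i) (HSf i)) T by move=> i; case: (Hmod i).
have Htr := holds_transfer S HSf HT Hchain Hcov Hmodel.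
have up := upper Hchain Hcov.
have HinV : forall i (x : substr U (S i) (HSf i)), inV D _ x <-> inV D U (sval x).
  by move=> i x; apply: (Htr _ i [:: x]).
have HaddR : forall i (x y z : substr U (S i) (HSf i)), addR D _ x y z <-> addR D U (sval x) (sval y) (sval z).
  by move=> i x y z; apply: (Htr _ i [:: x; y; z]).
have HscR : forall i a (x y : substr U (S i) (HSf i)), scR D _ a x y <-> scR D U a (sval x) (sval y).
  by move=> i a x y; apply: (Htr _ i [:: x; y]).
have Hz : forall i (x : substr U (S i) (HSf i)), iszero D _ x <-> iszero D U (sval x).
  by move=> i x; rewrite /iszero HinV HaddR.
have Hpup : forall i s (v u : substr U (S i) (HSf i)),
    polyrel D _ (sub_unary U (S i) (HSf i) thU (HSt i)) s v u -> polyrel D U thU s (sval v) (sval u).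
  move=> i; elim=> [|a s IH] v u /=; first by move/Hz.
  move=> [w [w' [H1 H2 H3 H4 H5]]].
  exists (sval w), (sval w'); split.
  - by apply/HinV.
  - by apply/HinV.
  - exact: (IH _ _ H3).
  - by apply/HscR.
  - by apply/HaddR.
have Hpdown : forall s v u, polyrel D U thU s v u -> exists i, forall k, (forall y, S i y -> S k y) ->
    exists pv pu, polyrel D _ (sub_unary U (S k) (HSf k) thU (HSt k)) s (exist _ v pv) (exist _ u pu).
  elim=> [|a s IH] v u /=.
  - move=> Hu.
    have [i0 Hi0] := Hcov v; have [i1 [H01 Hi1]] := up i0 u.
    exists i1 => k Hk; exists (Hk _ (H01 _ Hi0)), (Hk _ Hi1).
    by apply/Hz.
  - move=> [w [w' [H1 H2 H3 H4 H5]]].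
    have [i1 Hi1] := IH _ _ H3.
    have [i2 [H12 Hv]] := up i1 v.
    have [i3 [H23 Hw']] := up i2 w'.
    have [i4 [H34 Hu]] := up i3 u.
    exists i4 => k Hk.
    have [pthv [pw Hp]] := Hi1 k (fun y Hy => Hk _ (H34 _ (H23 _ (H12 _ Hy)))).
    have pv : S k v by apply: Hk; apply: H34; apply: H23.
    have pw' : S k w' by apply: Hk; apply: H34.
    exists pv, (Hk _ Hu), (exist _ w pw), (exist _ w' pw'); split.
    + by apply/HinV.
    + by apply/HinV.
    + by rewrite /sub_unary /=; rewrite (proof_irrelevance _ (HSt k v pv) pthv).
    + by apply/HscR.
    + by apply/HaddR.
have HKup : forall i P (v : substr U (S i) (HSf i)),
    Ker D _ (sub_unary U (S i) (HSf i) thU (HSt i)) P v -> Ker D U thU P (sval v).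
  move=> i P v [Hv [u [Hp Hu]]]; split; first by apply/HinV.
  by exists (sval u); split; [exact: Hpup | apply/Hz].
have HKdown : forall P v, Ker D U thU P v -> exists i pv,
    Ker D _ (sub_unary U (S i) (HSf i) thU (HSt i)) P (exist _ v pv).
  move=> P v [Hv [u [Hp Hu]]].
  have [i Hi] := Hpdown _ _ _ Hp.
  have [pv [pu Hp']] := Hi i (fun y Hy => Hy).
  exists i, pv; split; first by apply/HinV.
  by exists (exist _ u pu); split => //; apply/Hz.
split; [|split].
- case: Hne => i0; split.
    by case: (Hmodel i0) => -[x0] _; constructor; exact: (sval x0).
  move=> phi Hphi e.
  have H := (Htr phi i0 [::]).1 (fun e' => (Hmodel i0).2 phi Hphi _) e.
  simpl in H; have E : (fun k => nth (e k) [::] k) = e by apply: functional_extensionality => k; rewrite nth_nil.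
  by rewrite E in H.
- have Tok : forall i, theta_ok D _ (sub_unary U (S i) (HSf i) thU (HSt i)) by move=> i; case: (Hmod i) => _ [].
  split; [|split; [|split]].
  + move=> v Hv; have [i pv] := Hcov v.
    have [T1 _] := Tok i.
    exact: ((HinV i _).1 (T1 (exist _ v pv) ((HinV i (exist _ v pv)).2 Hv))).
  + move=> v w u Hv Hw Hu Ha.
    have [i0 p0] := Hcov v; have [i1 [H01 pw]] := up i0 w; have [i [H1 pu]] := up i1 u.
    have pv : S i v by apply: H1; apply: H01.
    have [_ [T2 _]] := Tok i.
    have := T2 (exist _ v pv) (exist _ w (H1 _ pw)) (exist _ u pu).
    rewrite !HinV HaddR /=; move=> H; have := H Hv Hw Hu Ha.
    by move/HaddR.
  + move=> a v u Hv Hu Ha.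
    have [i0 p0] := Hcov v; have [i [H01 pu]] := up i0 u.
    have pv : S i v by apply: H01.
    have [_ [_ [T3 _]]] := Tok i.
    have := T3 a (exist _ v pv) (exist _ u pu).
    rewrite !HinV HscR /=; move=> H; have := H Hv Hu Ha.
    by move/HscR.
  + move=> x Hx; have [i px] := Hcov x.
    have [_ [_ [_ T4]]] := Tok i.
    have := T4 (exist _ x px) (fun H => Hx ((HinV _ _).1 H)).
    by move/Hz.
- have Cend : forall i, C_endo D _ (sub_unary U (S i) (HSf i) thU (HSt i)) c d by move=> i; case: (Hmod i) => _ [].
  clear HC; move: Cend; rewrite /C_endo; case: d Hmod => [n|] Hmod Cend.
  + move=> P HP v Hv; have [i pv] := Hcov v.
    exact: (HKup i P (exist _ v pv) (Cend i P HP _ ((HinV i (exist _ v pv)).2 Hv))).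
  + move=> f m Hf Hc v; split=> H.
    * have [i [pv HK]] := HKdown _ _ H.
      exact: (HKup i _ (exist _ v pv) ((Cend i f m Hf Hc _).1 HK)).
    * have [i [pv HK]] := HKdown _ _ H.
      exact: (HKup i _ (exist _ v pv) ((Cend i f m Hf Hc _).2 HK)).
Qed.
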